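(* For all integers $n\ge0$ and real numbers $x\in(-1,1)$, $$0<\int_x^1\frac{T_{n+1}(t)\,U_n(t)}{\sqrt{1-t^2}}\,dt\le 1.$$ Equality holds on the right-hand side if and only if $n=0$ and $x=0$.
   Context: $T_j$ and $U_j$ denote the Chebyshev polynomials of the first and second kind of degree $j$: $T_j(\cos t)=\cos(jt)$ and $U_j(\cos t)=\sin((j+1)t)/\sin t$ for $t\in[0,\pi]$. *)

(* Defs.v *)
From Stdlib Require Import Reals.
Open Scope R_scope.

Fixpoint cheb_pair (a0 a1 t : R) (j : nat) : R * R :=
  match j with
  | O => (a0, a1)
  | S k => let (p, q) := cheb_pair a0 a1 t k in (q, 2 * t * q - p)
  end.

Definition ChebT (j : nat) (t : R) : R := fst (cheb_pair 1 t t j).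
Definition ChebU (j : nat) (t : R) : R := fst (cheb_pair 1 (2 * t) t j).

Definition improper_integral_to_1 (f : R -> R) (x L : R) : Prop :=
  (forall b, x <= b < 1 -> inhabited (Riemann_integrable f x b)) /\
  forall eps, eps > 0 -> exists delta, delta > 0 /\
    forall b (pr : Riemann_integrable f x b),
      x <= b < 1 -> 1 - delta < b -> Rabs (RiemannInt pr - L) < eps.

(* Main.v *)
Require Import Defs.
From Coquelicot Require Import Coquelicot.
From Stdlib Require Import Reals Lra Lia Nsatz.
Open Scope R_scope.

Lemma cheb_pair_S a0 a1 t k :
  cheb_pair a0 a1 t (S k) =
  (snd (cheb_pair a0 a1 t k), 2 * t * snd (cheb_pair a0 a1 t k) - fst (cheb_pair a0 a1 t k)).
Proof. simpl. destruct (cheb_pair a0 a1 t k); reflexivity. Qed.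

Lemma cheb_T_cos th j :
  cheb_pair 1 (cos th) (cos th) j = (cos (INR j * th), cos (INR (S j) * th)).
Proof.
  induction j as [|j IH].
  - simpl. rewrite Rmult_0_l, cos_0, Rmult_1_l. reflexivity.
  - rewrite cheb_pair_S, IH. cbn [fst snd]. f_equal.
    set (A := INR (S j) * th).
    replace (INR j * th) with (A - th) by (unfold A; rewrite S_INR; ring).
    replace (INR (S (S j)) * th) with (A + th) by (unfold A; rewrite !S_INR; ring).
    rewrite cos_plus, cos_minus. ring.
Qed.

Lemma cheb_U_sin th j :
  fst (cheb_pair 1 (2 * cos th) (cos th) j) * sin th = sin (INR (S j) * th) /\
  snd (cheb_pair 1 (2 * cos th) (cos th) j) * sin th = sin (INR (S (S j)) * th).
Proof.
  induction j as [|j [IH1 IH2]].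
  - cbn [cheb_pair fst snd]. split.
    + simpl INR. rewrite !Rmult_1_l. reflexivity.
    + replace (INR 2 * th) with (2 * th) by (rewrite (S_INR 1), INR_1; ring). rewrite sin_2a. ring.
  - rewrite cheb_pair_S. cbn [fst snd]. split; [exact IH2|].
    set (A := INR (S (S j)) * th).
    fold A in IH2.
    replace (INR (S j) * th) with (A - th) in IH1 by (unfold A; rewrite !S_INR; ring).
    replace (INR (S (S (S j))) * th) with (A + th) by (unfold A; rewrite !S_INR; ring).
    rewrite sin_plus.
    replace ((2 * cos th * snd (cheb_pair 1 (2 * cos th) (cos th) j) -
      fst (cheb_pair 1 (2 * cos th) (cos th) j)) * sin th)
      with (2 * cos th * (snd (cheb_pair 1 (2 * cos th) (cos th) j) * sin th) -
      fst (cheb_pair 1 (2 * cos th) (cos th) j) * sin th) by ring.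
    rewrite IH1, IH2, sin_minus. ring.
Qed.

Fixpoint Ssum (n : nat) (th : R) : R :=
  match n with
  | O => sin th
  | S k => Ssum k th + sin ((2 * INR (S k) + 1) * th) / (2 * INR (S k) + 1)
  end.

Fixpoint Csum (n : nat) (th : R) : R :=
  match n with
  | O => cos th
  | S k => Csum k th + cos ((2 * INR (S k) + 1) * th)
  end.

Lemma Csum_tel n th : Csum n th * sin th = sin (INR (S n) * th) * cos (INR (S n) * th).
Proof.
  induction n as [|n IH].
  - simpl. rewrite Rmult_1_l. ring.
  - cbn [Csum]. rewrite Rmult_plus_distr_r, IH.
    set (A := INR (S n) * th).
    replace ((2 * INR (S n) + 1) * th) with (2 * A + th) by (unfold A; ring).
    replace (INR (S (S n)) * th) with (A + th) by (unfold A; rewrite (S_INR (S n)); ring).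
    rewrite !cos_plus, !sin_plus, cos_2a, sin_2a.
    assert (E := sin2_cos2 th). unfold Rsqr in E.
    nsatz.
Qed.

Lemma sin_tel A th : sin th * sin (2 * A + th) = sin (A + th) ^ 2 - sin A ^ 2.
Proof.
  rewrite !sin_plus, cos_2a, sin_2a.
  assert (E := sin2_cos2 th). unfold Rsqr in E.
  match goal with |- ?L = ?R => assert (K : R - L = sin A ^ 2 * (sin th * sin th + cos th * cos th - 1)) by ring end.
  rewrite E in K. lra.
Qed.

Definition cc (j : nat) : R := 1 / (2 * INR j + 1) - 1 / (2 * INR j + 3).
Fixpoint Rsum (D : nat -> R) (n : nat) : R :=
  match n with O => 0 | S j => Rsum D j + cc j * D (S j) end.
Definition RR (D : nat -> R) (n : nat) : R := Rsum D n + D (S n) / (2 * INR n + 1).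

Lemma cc_pos j : 0 < cc j.
Proof.
  pose proof (pos_INR j).
  unfold cc. replace (1 / (2 * INR j + 1) - 1 / (2 * INR j + 3))
    with (2 / ((2 * INR j + 1) * (2 * INR j + 3))) by (field; lra).
  apply Rdiv_lt_0_compat; nra.
Qed.

Section Bounds.
Variable (D : nat -> R) (s : R).
Hypothesis Hs : 0 < s.
Hypothesis HD : forall j, 0 <= D j /\ D j <= INR j ^ 2 * s /\ D j <= 1 / s.

Lemma Rsum_small n : Rsum D n <= s * (INR n * (INR n + 1) / (2 * INR n + 1)).
Proof.
  induction n as [|n IH].
  - simpl. lra.
  - cbn [Rsum]. pose proof (cc_pos n). pose proof (pos_INR n).
    destruct (HD (S n)) as [_ [H2 _]].
    apply Rle_trans with (s * (INR n * (INR n + 1) / (2 * INR n + 1)) + cc n * (INR (S n) ^ 2 * s)).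
    + apply Rplus_le_compat; [exact IH|]. apply Rmult_le_compat_l; lra.
    + right. unfold cc. rewrite S_INR. field. lra.
Qed.

Lemma RR_small n : RR D n <= INR (S n) * s.
Proof.
  unfold RR. pose proof (pos_INR n).
  destruct (HD (S n)) as [_ [H2 _]].
  apply Rle_trans with (s * (INR n * (INR n + 1) / (2 * INR n + 1)) + (INR (S n) ^ 2 * s) / (2 * INR n + 1)).
  - apply Rplus_le_compat; [apply Rsum_small|].
    unfold Rdiv. apply Rmult_le_compat_r; [|exact H2].
    left; apply Rinv_0_lt_compat; lra.
  - right. rewrite S_INR. field. lra.
Qed.

Lemma Rsum_split q k X : X <= 1 / s ->
  Rsum D (q + k) + X / (2 * INR (q + k) + 1) <= Rsum D q + (1 / s) / (2 * INR q + 1).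
Proof.
  revert X. induction k as [|k IH]; intros X HX.
  - rewrite Nat.add_0_r. apply Rplus_le_compat_l. pose proof (pos_INR q).
    unfold Rdiv. apply Rmult_le_compat_r; [|exact HX].
    left; apply Rinv_0_lt_compat; lra.
  - rewrite Nat.add_succ_r. cbn [Rsum].
    set (N := (q + k)%nat) in *.
    pose proof (pos_INR N). pose proof (cc_pos N).
    destruct (HD (S N)) as [_ [_ H3]].
    apply Rle_trans with (Rsum D N + (1 / s) / (2 * INR N + 1)); [|apply IH; lra].
    rewrite Rplus_assoc. apply Rplus_le_compat_l.
    apply Rle_trans with (cc N * (1 / s) + (1 / s) / (2 * INR N + 3)).
    + apply Rplus_le_compat.
      * apply Rmult_le_compat_l; lra.
      * rewrite S_INR. replace (2 * (INR N + 1) + 1) with (2 * INR N + 3) by ring.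
        unfold Rdiv. apply Rmult_le_compat_r; [|exact HX].
        left; apply Rinv_0_lt_compat; lra.
    + right. unfold cc. field. split; lra.
Qed.

Lemma exists_q n : s <= 1 -> 1 < INR (S n) * s ->
  exists q, (1 <= q <= n)%nat /\ INR q * s <= 1 /\ 1 < INR (S q) * s.
Proof.
  intros Hs1. induction n as [|n IH]; intros H.
  - simpl in H. lra.
  - destruct (Rlt_dec 1 (INR (S n) * s)) as [Hl|Hl].
    + destruct (IH Hl) as [q [Hq1 Hq2]]. exists q. split; [lia|exact Hq2].
    + exists (S n). split; [lia|]. split; [lra|exact H].
Qed.

Lemma RR_le1 n : s <= 1 -> RR D n <= 1 /\ (RR D n = 1 -> exists k, INR k * s = 1).
Proof.
  intros Hs1.
  destruct (Rle_dec (INR (S n) * s) 1) as [Hm|Hm].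
  - pose proof (RR_small n). split; [lra|]. intros E. exists (S n). lra.
  - destruct (exists_q n Hs1 ltac:(lra)) as [q [Hq [Hq1 Hq2]]].
    assert (Hb : RR D n <= s * (INR q * (INR q + 1) / (2 * INR q + 1)) + (1 / s) / (2 * INR q + 1)).
    { unfold RR. replace n with (q + (n - q))%nat at 1 2 3 by lia.
      apply Rle_trans with (Rsum D q + (1 / s) / (2 * INR q + 1)).
      - apply Rsum_split. apply HD.
      - apply Rplus_le_compat_r. apply Rsum_small. }
    rewrite S_INR in Hq2.
    set (Q := INR q) in *.
    assert (HQ : 0 <= Q) by apply pos_INR.
    assert (Heq : s * (Q * (Q + 1) / (2 * Q + 1)) + 1 / s / (2 * Q + 1)
       = 1 + (Q * s - 1) * ((Q + 1) * s - 1) / (s * (2 * Q + 1))) by (field; lra).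
    rewrite Heq in Hb.
    assert (Hpos : 0 < s * (2 * Q + 1)) by nra.
    assert (Hnn : (Q * s - 1) * ((Q + 1) * s - 1) <= 0) by nra.
    assert (Hi : 0 < / (s * (2 * Q + 1))) by (apply Rinv_0_lt_compat; lra).
    assert (Z0 : (Q * s - 1) * ((Q + 1) * s - 1) * / (s * (2 * Q + 1)) <= 0) by nra.
    unfold Rdiv in Hb.
    split.
    + lra.
    + intros E. exists q. fold Q.
      assert (Z3 : (Q * s - 1) * ((Q + 1) * s - 1) * / (s * (2 * Q + 1)) = 0) by lra.
      apply Rmult_integral in Z3. destruct Z3 as [Z3|Z3].
      * apply Rmult_integral in Z3. destruct Z3; lra.
      * lra.
Qed.

End Bounds.

Lemma Rsum_mono D D' n : (forall j, D j <= D' j) -> Rsum D n <= Rsum D' n.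
Proof.
  intros H. induction n as [|n IH]; cbn [Rsum]; [lra|].
  pose proof (cc_pos n). pose proof (H (S n)). nra.
Qed.

Lemma RR_strict D D' n : (forall j, D j <= D' j) -> D 2%nat < D' 2%nat -> (1 <= n)%nat ->
  RR D n < RR D' n.
Proof.
  intros H H2 Hn. unfold RR.
  destruct n as [|[|k]]; [lia| |].
  - pose proof (Rsum_mono D D' 1 H). simpl INR.
    replace (2 * 1 + 1) with 3 by ring.
    assert (D 2%nat / 3 < D' 2%nat / 3) by lra. lra.
  - assert (Hs : Rsum D (S (S k)) < Rsum D' (S (S k))).
    { clear Hn. induction k as [|k IH].
      - cbn [Rsum]. pose proof (cc_pos 0). pose proof (cc_pos 1).
        pose proof (H 1%nat). nra.
      - change (Rsum D (S (S k)) + cc (S (S k)) * D (S (S (S k))) <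
          Rsum D' (S (S k)) + cc (S (S k)) * D' (S (S (S k)))).
        pose proof (cc_pos (S (S k))). pose proof (H (S (S (S k)))). nra. }
    pose proof (pos_INR (S (S k))).
    assert (D (S (S (S k))) / (2 * INR (S (S k)) + 1) <= D' (S (S (S k))) / (2 * INR (S (S k)) + 1)).
    { unfold Rdiv. apply Rmult_le_compat_r; [|apply H]. left; apply Rinv_0_lt_compat; lra. }
    lra.
Qed.

Lemma RR_pos D n : (forall j, 0 <= D j) -> 0 < D 1%nat -> 0 < RR D n.
Proof.
  intros H0 H1. unfold RR.
  assert (Hs : forall m, 0 <= Rsum D m).
  { induction m; cbn [Rsum]; [lra|]. pose proof (cc_pos m). pose proof (H0 (S m)). nra. }
  destruct n as [|k].
  - simpl. lra.
  - assert (0 < Rsum D (S k)).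
    { induction k as [|k IH].
      - cbn [Rsum]. pose proof (cc_pos 0). nra.
      - change (0 < Rsum D (S k) + cc (S k) * D (S (S k))).
        pose proof (cc_pos (S k)). pose proof (H0 (S (S k))). nra. }
    pose proof (pos_INR (S k)).
    assert (0 <= D (S (S k)) / (2 * INR (S k) + 1)).
    { unfold Rdiv; apply Rmult_le_pos; [apply H0| left; apply Rinv_0_lt_compat; lra]. }
    lra.
Qed.

Lemma sin_div_derive a th : a <> 0 -> is_derive (fun y => sin (a * y) / a) th (cos (a * th)).
Proof. intros Ha. auto_derive; [exact I|]. field. exact Ha. Qed.

Lemma Ssum_derive n th : is_derive (Ssum n) th (Csum n th).
Proof.
  induction n as [|k IH].
  - apply (is_derive_ext (fun y => sin y)); [intros; reflexivity|].
    simpl Csum. auto_derive; [exact I|ring].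
  - apply (is_derive_ext (fun y => Ssum k y + sin ((2 * INR (S k) + 1) * y) / (2 * INR (S k) + 1)));
      [intros; reflexivity|].
    replace (Csum (S k) th) with (plus (Csum k th) (cos ((2 * INR (S k) + 1) * th))) by reflexivity.
    apply (is_derive_plus (Ssum k) (fun y => sin ((2 * INR (S k) + 1) * y) / (2 * INR (S k) + 1))); [exact IH|].
    pose proof (pos_INR (S k)).
    apply sin_div_derive. lra.
Qed.

Lemma cheb_cont (a1 : R -> R) : continuity a1 -> forall j,
  continuity (fun t => fst (cheb_pair 1 (a1 t) t j)) /\
  continuity (fun t => snd (cheb_pair 1 (a1 t) t j)).
Proof.
  intros Ha j. induction j as [|j [IH1 IH2]].
  - split.
    + intros x. simpl. apply continuity_pt_const. intros a b; reflexivity.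
    + exact Ha.
  - split.
    + intros x. apply (continuity_pt_ext (fun t => snd (cheb_pair 1 (a1 t) t j))).
      * intros y. rewrite cheb_pair_S. reflexivity.
      * apply IH2.
    + intros x.
      apply (continuity_pt_ext (minus_fct (mult_fct (mult_fct (fct_cte 2) id)
         (fun t => snd (cheb_pair 1 (a1 t) t j))) (fun t => fst (cheb_pair 1 (a1 t) t j)))).
      * intros y. rewrite cheb_pair_S. reflexivity.
      * apply continuity_pt_minus; [|apply IH1].
        apply continuity_pt_mult; [|apply IH2].
        apply continuity_pt_mult; [apply continuity_pt_const; intros a b; reflexivity|].
        apply derivable_continuous_pt, derivable_pt_id.
Qed.

Definition ff n t := ChebT (S n) t * ChebU n t / sqrt (1 - t ^ 2).

Lemma ff_cont n t : -1 < t < 1 -> continuous (ff n) t.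
Proof.
  intros Ht. apply continuity_pt_filterlim.
  assert (CT : continuity (ChebT (S n))).
  { intros x. apply (continuity_pt_ext (fun t => fst (cheb_pair 1 (id t) t (S n)))); [reflexivity|].
    exact (proj1 (cheb_cont id (derivable_continuous _ derivable_id) (S n)) x). }
  assert (CU : continuity (ChebU n)).
  { intros x. apply (continuity_pt_ext (fun t => fst (cheb_pair 1 ((mult_fct (fct_cte 2) id) t) t n))); [reflexivity|].
    refine (proj1 (cheb_cont _ _ n) x).
    apply continuity_mult; [apply continuity_const; intros a b; reflexivity|].
    apply derivable_continuous, derivable_id. }
  apply (continuity_pt_ext (div_fct (mult_fct (ChebT (S n)) (ChebU n)) (comp sqrt (fun t => 1 - t ^ 2)))); [reflexivity|].
  apply continuity_pt_div.
  - apply continuity_pt_mult; [apply CT|apply CU].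
  - apply continuity_pt_comp.
    + reg.
    + apply continuity_pt_sqrt. nra.
  - unfold comp. apply Rgt_not_eq, sqrt_lt_R0. nra.
Qed.

Definition GG n t := Ssum n (acos t).

Lemma acos_facts t : -1 < t < 1 ->
  cos (acos t) = t /\ sin (acos t) = sqrt (1 - t ^ 2) /\ 0 < sin (acos t) /\
  sin (acos t) ^ 2 = 1 - t ^ 2.
Proof.
  intros Ht. pose proof (acos_bound_lt t Ht).
  assert (Hc : cos (acos t) = t) by (apply cos_acos; lra).
  assert (Hs : sin (acos t) = sqrt (1 - t ^ 2)).
  { rewrite sin_acos by lra. f_equal. unfold Rsqr. ring. }
  assert (Hp : 0 < sin (acos t)) by (apply sin_gt_0; lra).
  repeat split; try assumption.
  pose proof (sin2_cos2 (acos t)). rewrite Hc in H0. unfold Rsqr in H0. nra.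
Qed.

Lemma ff_eq n t : -1 < t < 1 ->
  ff n t = - (Csum n (acos t) * (-1 / sqrt (1 - t²))).
Proof.
  intros Ht. destruct (acos_facts t Ht) as [Hc [Hs [Hp _]]].
  replace (t²) with (t ^ 2) by (unfold Rsqr; ring).
  unfold ff. rewrite <- Hs.
  remember (acos t) as th eqn:Eth.
  assert (HT : ChebT (S n) t = cos (INR (S n) * th)).
  { rewrite <- Hc. unfold ChebT. rewrite cheb_T_cos. reflexivity. }
  assert (HU : ChebU n t * sin th = sin (INR (S n) * th)).
  { rewrite <- Hc. unfold ChebU. apply (cheb_U_sin th n). }
  pose proof (Csum_tel n th) as HC.
  rewrite HT.
  replace (ChebU n t) with (sin (INR (S n) * th) / sin th) by (rewrite <- HU; field; lra).
  replace (Csum n th) with (sin (INR (S n) * th) * cos (INR (S n) * th) / sin th) by (rewrite <- HC; field; lra).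
  field. lra.
Qed.

Lemma GG_derive n t : -1 < t < 1 -> is_derive (fun y => - GG n y) t (ff n t).
Proof.
  intros Ht. apply is_derive_Reals.
  rewrite (ff_eq n t Ht).
  apply derivable_pt_lim_opp.
  apply (derivable_pt_lim_comp acos (Ssum n)).
  - apply (derive_pt_eq_1 _ _ _ (derivable_pt_acos t Ht)). apply derive_pt_acos.
  - apply is_derive_Reals. apply Ssum_derive.
Qed.

Lemma GG_RInt n x b : -1 < x -> x <= b -> b < 1 -> is_RInt (ff n) x b (GG n x - GG n b).
Proof.
  intros H1 H2 H3.
  replace (GG n x - GG n b) with (minus ((fun y => - GG n y) b) ((fun y => - GG n y) x))
    by (unfold minus, plus, opp; simpl; ring).
  apply (is_RInt_derive (fun y => - GG n y) (ff n)).
  - intros y Hy. rewrite Rmin_left in Hy by lra. rewrite Rmax_right in Hy by lra.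
    apply GG_derive. lra.
  - intros y Hy. rewrite Rmin_left in Hy by lra. rewrite Rmax_right in Hy by lra.
    apply ff_cont. lra.
Qed.

Lemma Ssum_RR n th : sin th <> 0 ->
  Ssum n th = RR (fun j => sin (INR j * th) ^ 2 / sin th) n.
Proof.
  intros Hs. induction n as [|k IH].
  - unfold RR. cbn [Rsum Ssum]. simpl INR. rewrite Rmult_1_l. field. exact Hs.
  - unfold RR in *. cbn [Rsum Ssum]. rewrite IH.
    pose proof (sin_tel (INR (S k) * th) th) as T.
    pose proof (pos_INR k).
    replace (2 * (INR (S k) * th) + th) with ((2 * INR (S k) + 1) * th) in T by ring.
    replace (INR (S k) * th + th) with (INR (S (S k)) * th) in T by (rewrite (S_INR (S k)); ring).
    replace (sin ((2 * INR (S k) + 1) * th)) with ((sin (INR (S (S k)) * th) ^ 2 - sin (INR (S k) * th) ^ 2) / sin th)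
      by (rewrite <- T; field; exact Hs).
    unfold cc. rewrite !S_INR. field. repeat split; (exact Hs || lra).
Qed.

Lemma sin_mult_bound j th : Rabs (sin (INR j * th)) <= INR j * Rabs (sin th).
Proof.
  induction j as [|j IH].
  - simpl. rewrite Rmult_0_l, sin_0, Rabs_R0. lra.
  - rewrite S_INR. replace ((INR j + 1) * th) with (INR j * th + th) by ring.
    rewrite sin_plus.
    eapply Rle_trans; [apply Rabs_triang|]. rewrite !Rabs_mult.
    pose proof (Rabs_pos (sin (INR j * th))). pose proof (Rabs_pos (sin th)).
    assert (Rabs (cos th) <= 1) by (apply Rabs_le; apply COS_bound).
    assert (Rabs (cos (INR j * th)) <= 1) by (apply Rabs_le; apply COS_bound).
    nra.
Qed.

Lemma DD_bounds th : 0 < sin th -> forall j,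
  0 <= sin (INR j * th) ^ 2 / sin th /\
  sin (INR j * th) ^ 2 / sin th <= INR j ^ 2 * sin th /\
  sin (INR j * th) ^ 2 / sin th <= 1 / sin th.
Proof.
  intros Hs j. pose proof (sin_mult_bound j th) as B.
  rewrite (Rabs_pos_eq (sin th)) in B by lra.
  pose proof (pos_INR j).
  assert (Q : sin (INR j * th) ^ 2 <= (INR j * sin th) ^ 2).
  { rewrite <- (pow2_abs (sin (INR j * th))). pose proof (Rabs_pos (sin (INR j * th))). nra. }
  assert (Q2 : sin (INR j * th) ^ 2 <= 1).
  { pose proof (SIN_bound (INR j * th)). nra. }
  assert (Hi : 0 < / sin th) by (apply Rinv_0_lt_compat; lra).
  unfold Rdiv. repeat split.
  - apply Rmult_le_pos; [nra|lra].
  - replace (INR j ^ 2 * sin th) with ((INR j * sin th) ^ 2 * / sin th) by (field; lra). nra.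
  - nra.
Qed.

Theorem theorem4p5 (n : nat) (x : R) (hx : -1 < x < 1) :
  exists L : R,
    improper_integral_to_1
      (fun t => ChebT (S n) t * ChebU n t / sqrt (1 - t ^ 2)) x L /\
    0 < L <= 1 /\
    (L = 1 <-> (n = 0%nat /\ x = 0)).
Proof.
  change (fun t => ChebT (S n) t * ChebU n t / sqrt (1 - t ^ 2)) with (ff n).
  exists (GG n x).
  assert (Rep : forall t, -1 < t < 1 ->
    GG n t = RR (fun j => sin (INR j * acos t) ^ 2 / sin (acos t)) n /\
    0 < sin (acos t) /\ sin (acos t) ^ 2 = 1 - t ^ 2).
  { intros t Ht. destruct (acos_facts t Ht) as [_ [_ [Hp Hsq]]].
    split; [|split; assumption]. unfold GG. apply Ssum_RR. lra. }
  split; [split|].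
  - intros b Hb. constructor. apply ex_RInt_Reals_0. exists (GG n x - GG n b).
    apply GG_RInt; lra.
  - intros eps Heps.
    pose proof (pos_INR (S n)) as Hm0.
    assert (Hm : 0 < INR (S n)) by (apply lt_0_INR; lia).
    exists ((eps / INR (S n)) ^ 2 / 2). split.
    { apply Rdiv_lt_0_compat; [|lra]. apply pow_lt. apply Rdiv_lt_0_compat; lra. }
    intros b pr Hb Hd.
    rewrite <- RInt_Reals.
    rewrite (is_RInt_unique (ff n) x b (GG n x - GG n b)) by (apply GG_RInt; lra).
    destruct (Rep b ltac:(lra)) as [E [Hp Hsq]].
    pose proof (DD_bounds (acos b) Hp) as HD.
    pose proof (RR_small _ _ HD n) as Hsm.
    set (s := sin (acos b)) in *.
    pose proof (RR_pos (fun j => sin (INR j * acos b) ^ 2 / sin (acos b)) n) as Hpos.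
    assert (P : 0 < GG n b).
    { rewrite E. apply Hpos. intros j; apply HD.
      cbv beta. simpl INR. rewrite Rmult_1_l. fold s.
      apply Rdiv_lt_0_compat; [apply pow_lt|]; lra. }
    replace (GG n x - GG n b - GG n x) with (- GG n b) by ring.
    rewrite Rabs_Ropp, Rabs_pos_eq by lra.
    rewrite E.
    assert (Hs2 : s ^ 2 < (eps / INR (S n)) ^ 2).
    { rewrite Hsq. nra. }
    assert (Hs3 : s < eps / INR (S n)).
    { assert (0 < eps / INR (S n)) by (apply Rdiv_lt_0_compat; lra).
      destruct (Rlt_or_le s (eps / INR (S n))) as [?|Hge]; [assumption|].
      exfalso. nra. }
    apply Rle_lt_trans with (INR (S n) * s); [exact Hsm|].
    apply (Rmult_lt_compat_l (INR (S n))) in Hs3; [|exact Hm].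
    replace (INR (S n) * (eps / INR (S n))) with eps in Hs3 by (field; lra). exact Hs3.
  - destruct (Rep x hx) as [E [Hp Hsq]].
    set (th := acos x) in *.
    pose proof (DD_bounds th Hp) as HD.
    set (D := fun j => sin (INR j * th) ^ 2 / sin th) in *.
    set (s := sin th) in *.
    assert (Hs1 : s <= 1) by (apply SIN_bound).
    assert (HD1 : 0 < D 1%nat).
    { unfold D. simpl INR. rewrite Rmult_1_l. fold s.
      apply Rdiv_lt_0_compat; [apply pow_lt|]; lra. }
    destruct (RR_le1 D s Hp HD n Hs1) as [Hle Heq].
    assert (Hpos : 0 < RR D n) by (apply RR_pos; [intros j; apply HD|exact HD1]).
    rewrite E. split; [split; lra|].
    split.
    + intros H1.
      destruct n as [|n'].
      * split; [reflexivity|].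
        unfold RR in H1. cbn [Rsum] in H1. unfold D in H1. simpl INR in H1.
        rewrite Rmult_1_l in H1. fold s in H1.
        assert (s = 1) by (field_simplify in H1; [lra|lra]).
        nra.
      * exfalso.
        destruct (Req_dec (s ^ 2) (1 / 2)) as [Hh|Hh].
        -- destruct (Heq H1) as [k Hk].
           assert (Hk2 : INR k ^ 2 * s ^ 2 = (INR k * s) ^ 2) by ring.
           rewrite Hk in Hk2. replace (1 ^ 2) with 1 in Hk2 by ring.
           rewrite Hh in Hk2.
           destruct k as [|[|k]].
           ++ simpl in Hk2. lra.
           ++ simpl in Hk2. lra.
           ++ assert (2 <= INR (S (S k))).
              { rewrite !S_INR. pose proof (pos_INR k). lra. }
              nra.
        -- set (m := Rmin (4 * s) (1 / s)).
           set (D' := fun j => if Nat.eqb j 2 then m else D j).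
           assert (H2 : D 2%nat = 4 * s * (1 - s ^ 2)).
           { unfold D. replace (INR 2 * th) with (2 * th) by (rewrite (S_INR 1), INR_1; ring).
             rewrite sin_2a. fold s.
             pose proof (sin2_cos2 th) as SC. fold s in SC. unfold Rsqr in SC.
             field_simplify; [|lra]. nra. }
           assert (Hm4 : m <= 4 * s) by apply Rmin_l.
           assert (Hm1 : m <= 1 / s) by apply Rmin_r.
           assert (Hlt : D 2%nat < m).
           { unfold m. apply Rmin_glb_lt.
             - rewrite H2. assert (0 < s * s ^ 2) by (apply Rmult_lt_0_compat; [lra| apply pow_lt; lra]). nra.
             - rewrite H2. apply (Rmult_lt_reg_r s); [lra|].
               replace (1 / s * s) with 1 by (field; lra).
               assert (Hne : 2 * s ^ 2 - 1 <> 0) by lra.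
               pose proof (Rsqr_pos_lt _ Hne). unfold Rsqr in *.
               nra. }
           assert (HD' : forall j, 0 <= D' j /\ D' j <= INR j ^ 2 * s /\ D' j <= 1 / s).
           { intros j. unfold D'. destruct (Nat.eqb_spec j 2) as [->|Hj].
             - replace (INR 2) with 2 by (rewrite (S_INR 1), INR_1; ring).
               destruct (HD 2%nat) as [H0 _]. change (0 <= D 2%nat) in H0.
               split; [|split]; [lra| replace (2 ^ 2 * s) with (4 * s) by ring; lra | lra].
             - apply HD. }
           assert (Hle' : forall j, D j <= D' j).
           { intros j. unfold D'. destruct (Nat.eqb_spec j 2) as [->|Hj]; lra. }
           pose proof (RR_strict D D' (S n') Hle' ltac:(unfold D'; simpl; lra) ltac:(lia)).
           destruct (RR_le1 D' s Hp HD' (S n') Hs1). lra.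
    + intros [-> ->].
      unfold RR. cbn [Rsum]. unfold D. simpl INR. rewrite Rmult_1_l.
      unfold s, th. rewrite acos_0, sin_PI2. field.
Qed.
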